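(* Let $I_n:=\iint_T \frac{(-\ln xy)^n}{xy}\,dx\,dy$. Then $I_n\sim 2\,n!$ as $n\to\infty$. More precisely, for every fixed integer $K\ge1$, \[ \frac{I_n}{n!}=\sum_{j=1}^{K}\binom{2j}{j}\frac{1}{j^{\,n+2}} + O\!\left((K+1)^{-n}\right)\qquad(n\to\infty), \] i.e. $I_n/n!\approx 2+\frac{6}{2^{n+2}}+\frac{20}{3^{n+2}}+\frac{70}{4^{n+2}}+\cdots$.
   Context: $T:=\{(x,y)\in[0,1]^2 : x+y\ge 1\}$. *)

(* Defs.v *)
From Stdlib Require Import Reals Lra Arith Factorial.
Open Scope R_scope.

Definition integrand (n : nat) (x y : R) : R :=
  (- ln (x * y)) ^ n / (x * y).

Definition is_RInt (f : R -> R) (a b v : R) : Prop :=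
  exists pr : Riemann_integrable f a b, RiemannInt pr = v.

Definition is_improper_int01 (g : R -> R) (v : R) : Prop :=
  forall eps : R, 0 < eps -> exists delta : R, 0 < delta /\
    forall a b : R, 0 < a < delta -> 1 - delta < b < 1 ->
      exists pr : Riemann_integrable g a b, Rabs (RiemannInt pr - v) < eps.

(* v = iint_T integrand n, T = {(x,y) in [0,1]^2 : x + y >= 1}, computed as the
   iterated integral  int_0^1 ( int_{1-x}^1 integrand n x y dy ) dx  (improper
   in x at both endpoints; the inner integral is proper for 0 < x < 1). *)
Definition is_I (n : nat) (v : R) : Prop :=
  exists g : R -> R,
    (forall x, 0 < x < 1 -> is_RInt (integrand n x) (1 - x) 1 (g x)) /\
    is_improper_int01 g v.

(* sum_{j=1}^K binom(2j,j) / j^(n+2)   (for K >= 1) *)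
Definition partial_sum (K n : nat) : R :=
  sum_f_R0 (fun i => C (2 * (i + 1)) (i + 1) / (INR (i + 1)) ^ (n + 2)) (K - 1).

(* Main.v *)
Require Import Defs.
From Stdlib Require Import Reals Lra Lia Arith Factorial.
From Coquelicot Require Import Coquelicot.
Open Scope R_scope.

Ltac fixS := repeat match goal with |- context [match ?n with 0%nat => 1 | S _ => INR ?n + 1 end] =>
   change (match n with 0%nat => 1 | S _ => INR n + 1 end) with (INR (S n)) end.

Definition gf (n : nat) (x : R) : R :=
  ((- ln (x * (1 - x)))^(S n) - (- ln x)^(S n)) / (INR (S n) * x).

Lemma exd_cont (f : R -> R) x : ex_derive f x -> continuous f x.
Proof. intros H. exact (ex_derive_continuous f x H). Qed.

Lemma ftc (f df : R -> R) a b :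
  (forall x, Rmin a b <= x <= Rmax a b -> is_derive f x (df x)) ->
  (forall x, Rmin a b <= x <= Rmax a b -> continuous df x) ->
  is_RInt df a b (f b - f a).
Proof. intros H1 H2. exact (is_RInt_derive (V:=R_CompleteNormedModule) f df a b H1 H2). Qed.

Lemma exint_cont (f : R -> R) a b :
  (forall z, Rmin a b <= z <= Rmax a b -> continuous f z) -> ex_RInt f a b.
Proof. intros H. exact (ex_RInt_continuous (V:=R_CompleteNormedModule) f a b H). Qed.

Lemma INRS_pos n : 0 < INR (S n).
Proof. apply lt_0_INR; lia. Qed.

Lemma inner_ok n x : 0 < x < 1 -> Defs.is_RInt (integrand n x) (1 - x) 1 (gf n x).
Proof.
  intros [h0 h1].
  assert (HS := INRS_pos n).
  set (F := fun y => - (- ln (x*y))^(S n) / (INR (S n) * x)).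
  assert (HD : forall y, 0 < y -> is_derive F y (integrand n x y)).
  { intros y hy. unfold F. auto_derive. apply Rmult_lt_0_compat; lra.
    fixS. unfold integrand. field. repeat split; try lra;
    try (apply Rgt_not_eq, Rmult_lt_0_compat; lra). }
  assert (HC : forall y, 0 < y -> continuous (integrand n x) y).
  { intros y hy. apply exd_cont. unfold integrand. auto_derive.
    repeat split; try lra; try (apply Rmult_lt_0_compat; lra);
    try (apply Rgt_not_eq, Rmult_lt_0_compat; lra). }
  assert (Hint : is_RInt (integrand n x) (1-x) 1 (F 1 - F (1-x))).
  { apply ftc; intros y hy; rewrite Rmin_left in hy by lra;
      rewrite Rmax_right in hy by lra.
    apply HD; lra. apply HC; lra. }
  exists (ex_RInt_Reals_0 _ _ _ (ex_intro _ _ Hint)).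
  rewrite <- RInt_Reals. rewrite (is_RInt_unique _ _ _ _ Hint).
  unfold F, gf. rewrite Rmult_1_r. field. lra.
Qed.


Definition Wf (n : nat) (x : R) : R :=
  2 * (- ln (1 - x)) * (- ln x + - ln (1 - x))^(S n) / INR (S n)
  + ((- ln x)^(S (S n)) - (- ln x + - ln (1 - x))^(S (S n)) - (- ln (1 - x))^(S (S n)))
    / (INR (S n) * INR (S (S n))).

Definition f1 (n : nat) (x : R) : R :=
  2 * (- ln (1 - x)) * (- ln x + - ln (1 - x))^n * (1 - 2 * x) / (x * (1 - x)).

Definition hf (n : nat) (x : R) : R := gf n x + gf n (1 - x).

Lemma W_deriv n x : 0 < x < 1 -> is_derive (Wf n) x (hf n x - f1 n x).
Proof.
  intros [h0 h1]. unfold Wf. auto_derive. repeat split; lra.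
  fixS. unfold hf, gf, f1.
  replace (1 - (1 - x)) with x by ring.
  rewrite !ln_mult by lra.
  replace (1 + - x) with (1 - x) by ring.
  set (a := ln x). set (b := ln (1 - x)).
  replace (- (a + b)) with (- a + - b) by ring.
  replace (- (b + a)) with (- a + - b) by ring.
  rewrite <- !tech_pow_Rmult.
  set (p := (- a + - b)^n). set (q := (-a)^n). set (r := (-b)^n).
  rewrite S_INR. assert (0 <= INR n) by apply pos_INR.
  field. repeat split; lra.
Qed.


Lemma ln_le' x y : 0 < x -> x <= y -> ln x <= ln y.
Proof. intros h1 h2. destruct (Rle_lt_or_eq_dec _ _ h2) as [h|h].
  left; apply ln_increasing; lra. subst; lra. Qed.

Lemma ln_le_sub1 y : 0 < y -> ln y <= y - 1.
Proof. intros h. generalize (exp_ineq1_le (ln y)). rewrite exp_ln by lra. lra. Qed.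

Lemma mln_nonneg x : 0 < x <= 1 -> 0 <= - ln x.
Proof. intros h. assert (ln x <= ln 1) by (apply ln_le'; lra). rewrite ln_1 in H. lra. Qed.

Lemma mln1x_bound x : 0 < x <= 1/2 -> 0 <= - ln (1 - x) <= 2 * x.
Proof. intros h. split. apply mln_nonneg; lra.
  assert (ln (/ (1 - x)) <= / (1-x) - 1) by (apply ln_le_sub1; apply Rinv_0_lt_compat; lra).
  rewrite ln_Rinv in H by lra.
  assert (/ (1 - x) - 1 <= 2 * x).
  { assert (/ (1-x) <= 1 + 2*x); [|lra].
    apply (Rmult_le_reg_l (1-x)); [lra|]. rewrite Rinv_r by lra. nra. }
  lra. Qed.

Lemma exp_ge_pow y m : 0 <= y -> y ^ m / INR (fact m) <= exp y.
Proof. intros h. eapply Rle_trans; [|apply (exp_ge_taylor y m h)].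
  destruct m. simpl. lra. rewrite tech5.
  assert (0 <= sum_f_R0 (fun k => y ^ k / INR (fact k)) m).
  { apply cond_pos_sum. intros k. apply Rmult_le_pos. apply pow_le; auto.
    apply Rlt_le, Rinv_0_lt_compat, lt_0_INR, lt_O_fact. }
  lra. Qed.

Lemma fact_pos m : 0 < INR (fact m).
Proof. apply lt_0_INR, lt_O_fact. Qed.

Lemma xlog_small c m eps : 0 <= c -> 0 < eps ->
  exists d, 0 < d <= 1 /\ forall x, 0 < x < d -> x * (c + - ln x)^m < eps.
Proof.
  intros hc he.
  set (Y := exp c * INR (fact (S m)) / eps).
  assert (hY : 0 < Y) by (unfold Y; apply Rdiv_lt_0_compat; [apply Rmult_lt_0_compat; [apply exp_pos|apply fact_pos]|lra]).
  exists (Rmin 1 (exp (- Y))). split. split. apply Rmin_glb_lt; [lra|apply exp_pos]. apply Rmin_l.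
  intros x [hx0 hx1].
  assert (hx2 : x < exp (- Y)) by (eapply Rlt_le_trans; [apply hx1|apply Rmin_r]).
  assert (hT : Y < - ln x).
  { assert (ln x < ln (exp (-Y))) by (apply ln_increasing; lra). rewrite ln_exp in H. lra. }
  set (y := c + - ln x). assert (hy : Y < y) by (unfold y; lra).
  assert (hxe : x = exp c * exp (- y)).
  { rewrite <- exp_plus. unfold y. replace (c + - (c + - ln x)) with (ln x) by ring. rewrite exp_ln; lra. }
  assert (H1 := exp_ge_pow y (S m) ltac:(lra)).
  assert (hyp : 0 < y) by lra.
  assert (Hf := fact_pos (S m)).
  assert (hey : 0 < exp y) by apply exp_pos.
  assert (H2 : y ^ (S m) <= INR (fact (S m)) * exp y).
  { assert (y ^ (S m) = (y ^ (S m) / INR (fact (S m))) * INR (fact (S m))) by (field; lra).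
    rewrite H. rewrite (Rmult_comm (INR _)). apply Rmult_le_compat_r; lra. }
  rewrite <- tech_pow_Rmult in H2.
  rewrite hxe. fold y. rewrite exp_Ropp.
  assert (hec := exp_pos c).
  assert (hP : 0 <= y ^ m) by (apply pow_le; lra).
  assert (H3 : exp c * / exp y * y ^ m * y <= exp c * INR (fact (S m))).
  { replace (exp c * / exp y * y ^ m * y) with ((exp c * / exp y) * (y * y ^ m)) by ring.
    replace (exp c * INR (fact (S m))) with ((exp c * / exp y) * (INR (fact (S m)) * exp y)) by (field; lra).
    apply Rmult_le_compat_l; [|lra]. apply Rmult_le_pos; [lra|]. apply Rlt_le, Rinv_0_lt_compat; lra. }
  assert (H4 : exp c * INR (fact (S m)) = Y * eps) by (unfold Y; field; lra).
  assert (H5 : Y * eps < y * eps) by (apply Rmult_lt_compat_r; lra).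
  apply (Rmult_lt_reg_r y); [lra|]. lra.
Qed.

Lemma diffpow A P m : 0 <= A <= P -> P^(S m) - A^(S m) <= INR (S m) * (P - A) * P^m.
Proof.
  intros h. induction m.
  - simpl. lra.
  - rewrite <- !(tech_pow_Rmult _ (S m)). rewrite S_INR.
    assert (hA : A^(S m) <= P^(S m)) by (apply pow_incr; lra).
    assert (hAm : 0 <= A^(S m)) by (apply pow_le; lra).
    assert (hPm : P^(S m) = P * P^m) by (rewrite tech_pow_Rmult; auto).
    assert (0 <= P^m) by (apply pow_le; lra).
    (* P*P^{m+1} - A*A^{m+1} = P(P^{m+1}-A^{m+1}) + (P-A) A^{m+1} *)
    assert (P * (P^(S m) - A^(S m)) <= P * (INR (S m) * (P - A) * P^m)) by (apply Rmult_le_compat_l; lra).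
    assert ((P - A) * A^(S m) <= (P - A) * P^(S m)) by (apply Rmult_le_compat_l; lra).
    rewrite hPm in *. nra.
Qed.

Lemma INR_ge1 m : (1 <= m)%nat -> 1 <= INR m.
Proof. intros h. apply (le_INR 1 m) in h. simpl in h. lra. Qed.

Lemma W_bound n x : 0 < x <= 1/2 -> Rabs (Wf n x) <= INR (n + 5) * (2 * x) * (2 + - ln x)^(S n).
Proof.
  intros hx. unfold Wf.
  assert (hA : 0 <= - ln x) by (apply mln_nonneg; lra).
  assert (hB := mln1x_bound x hx).
  set (A := - ln x) in *. set (B := - ln (1 - x)) in *.
  set (Y := 2 + A).
  assert (hP : A + B <= Y) by (unfold Y; lra).
  assert (hPS : (A + B)^(S n) <= Y^(S n)) by (apply pow_incr; lra).
  assert (hY1 : 1 <= Y^(S n)) by (rewrite <- (pow1 (S n)); apply pow_incr; unfold Y; lra).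
  assert (hd := diffpow A (A + B) (S n) ltac:(lra)).
  assert (hd0 : A^(S (S n)) <= (A+B)^(S (S n))) by (apply pow_incr; lra).
  assert (hBB : B^(S (S n)) <= B).
  { simpl. assert (B^n <= 1) by (rewrite <- (pow1 n); apply pow_incr; lra).
    assert (0 <= B^n) by (apply pow_le; lra). nra. }
  assert (hBB0 : 0 <= B^(S (S n))) by (apply pow_le; lra).
  assert (h1 : 1 <= INR (S n)) by (apply INR_ge1; lia).
  assert (h2 : 1 <= INR (S (S n))) by (apply INR_ge1; lia).
  assert (hn5 : INR (n + 5) = INR (S (S n)) + 3) by (rewrite plus_INR, !S_INR; simpl; ring).
  assert (hPS0 : 0 <= (A+B)^(S n)) by (apply pow_le; lra).
  set (T1 := 2 * B * (A + B)^(S n) / INR (S n)).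
  set (N2 := A ^ S (S n) - (A + B) ^ S (S n) - B ^ S (S n)).
  assert (hT1 : 0 <= T1 <= 2 * B * Y^(S n)).
  { unfold T1. split. apply Rmult_le_pos. nra. apply Rlt_le, Rinv_0_lt_compat; lra.
    apply (Rmult_le_reg_r (INR (S n))); [lra|]. field_simplify; [|lra].
    assert (0 <= B * Y^(S n)) by nra. nra. }
  assert (hN2 : Rabs N2 <= INR (S (S n)) * B * Y^(S n) + B).
  { unfold N2. rewrite Rabs_left1 by lra.
    replace (A + B - A) with B in hd by ring.
    assert (INR (S (S n)) * B * (A + B)^(S n) <= INR (S (S n)) * B * Y^(S n)).
    { apply Rmult_le_compat_l; [nra|lra]. }
    lra. }
  assert (hD : 1 <= INR (S n) * INR (S (S n))) by nra.
  assert (hT2 : Rabs (N2 / (INR (S n) * INR (S (S n)))) <= Rabs N2).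
  { unfold Rdiv. rewrite Rabs_mult. rewrite Rabs_inv. rewrite (Rabs_right (INR (S n) * INR (S (S n)))) by lra.
    assert (0 <= Rabs N2) by apply Rabs_pos.
    assert (/ (INR (S n) * INR (S (S n))) <= 1).
    { rewrite <- Rinv_1. apply Rinv_le_contravar; lra. }
    assert (0 < / (INR (S n) * INR (S (S n)))) by (apply Rinv_0_lt_compat; lra). nra. }
  eapply Rle_trans. apply Rabs_triang. rewrite (Rabs_right T1) by lra.
  assert (hBY : B <= B * Y^(S n)) by nra.
  assert (INR (n + 5) * B * Y^(S n) <= INR (n + 5) * (2 * x) * Y^(S n)).
  { apply Rmult_le_compat_r. lra. apply Rmult_le_compat_l. apply pos_INR. lra. }
  rewrite hn5 in *. nra.
Qed.


(* antiderivative of (-ln u)^n * u^i *)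
Fixpoint Qf (i n : nat) (u : R) : R :=
  match n with
  | O => u^(S i) / INR (S i)
  | S m => u^(S i) * (- ln u)^(S m) / INR (S i) + INR (S m) / INR (S i) * Qf i m u
  end.

Lemma powS_deriv i u : is_derive (fun t => t^(S i)) u (INR (S i) * u^i).
Proof.
  assert (H := is_derive_pow (fun t => t) (S i) u 1 (is_derive_id u)).
  simpl pred in H. rewrite Rmult_1_r in H. exact H.
Qed.

Lemma mlnpow_deriv n u : 0 < u -> is_derive (fun t => (- ln t)^n) u (INR n * (- / u) * (- ln u)^(pred n)).
Proof.
  intros hu. apply (is_derive_pow (fun t => - ln t) n u).
  auto_derive. auto. field. lra.
Qed.

Lemma mult_deriv (f g : R -> R) x df dg : is_derive f x df -> is_derive g x dg ->
  is_derive (fun t => f t * g t) x (df * g x + f x * dg).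
Proof. intros H1 H2. exact (is_derive_mult f g x df dg H1 H2 Rmult_comm). Qed.

Lemma Q_deriv i n u : 0 < u -> is_derive (Qf i n) u ((- ln u)^n * u^i).
Proof.
  intros hu. assert (hS := INRS_pos i).
  induction n.
  - simpl Qf. eapply is_derive_ext. { intros t. unfold Rdiv. rewrite Rmult_comm. reflexivity. }
    eapply is_derive_ext_loc; [apply filter_forall; intros; reflexivity|].
    replace ((- ln u)^0 * u^i) with (/ INR (S i) * (INR (S i) * u^i)) by (rewrite pow_O; field; lra).
    apply is_derive_scal. apply powS_deriv.
  - simpl Qf.
    assert (H1 := mult_deriv _ _ u _ _ (powS_deriv i u) (mlnpow_deriv (S n) u hu)).
    assert (H1' := is_derive_scal _ u (/ INR (S i)) _ H1).
    assert (H2 := is_derive_scal (Qf i n) u (INR (S n) / INR (S i)) _ IHn).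
    assert (H3 := is_derive_plus _ _ u _ _ H1' H2).
    eapply is_derive_ext; [|eapply is_derive_ext_loc; [apply filter_forall; intros; reflexivity|]].
    2: { replace ((- ln u) ^ S n * u ^ i) with
           (plus (/ INR (S i) * (INR (S i) * u ^ i * (- ln u) ^ S n + u ^ S i * (INR (S n) * - / u * (- ln u) ^ pred (S n))))
                 (INR (S n) / INR (S i) * ((- ln u) ^ n * u ^ i))).
         exact H3.
         change (plus ?a ?b) with (a + b). cbv beta. simpl pred. rewrite <- !tech_pow_Rmult. match goal with |- ?a = ?b => change (@eq R a b) end. field. lra. }
    intros t. change (plus ?a ?b) with (a + b). cbv beta. match goal with |- ?a = ?b => change (@eq R a b) end. fixS. rewrite <- ?tech_pow_Rmult. unfold Rdiv. ring.
Qed.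

Lemma cont_pt_of_derive (f : R -> R) x l : is_derive f x l -> continuity_pt f x.
Proof. intros H. apply continuity_pt_filterlim. apply (exd_cont f x). exists l; exact H. Qed.

Lemma Q_one i n : Qf i n 1 = INR (fact n) / INR (S i)^(S n).
Proof.
  assert (hS := INRS_pos i).
  induction n.
  - cbn [Qf]. rewrite pow1. replace (INR (fact 0)) with 1 by reflexivity. rewrite pow_1. field. lra.
  - cbn [Qf]. rewrite ln_1, pow1, IHn. rewrite Ropp_0, pow_i by lia.
    rewrite fact_simpl, mult_INR. rewrite <- !tech_pow_Rmult. field. split; [apply pow_nonzero|]; lra.
Qed.

Lemma Q_nonneg i n u : 0 < u <= 1 -> 0 <= Qf i n u.
Proof.
  intros hu. assert (hS := INRS_pos i). assert (hl := mln_nonneg u hu).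
  induction n; cbn [Qf].
  - apply Rmult_le_pos. apply pow_le; lra. apply Rlt_le, Rinv_0_lt_compat; lra.
  - apply Rplus_le_le_0_compat.
    + apply Rmult_le_pos. apply Rmult_le_pos; apply pow_le; lra. apply Rlt_le, Rinv_0_lt_compat; lra.
    + apply Rmult_le_pos; auto. apply Rmult_le_pos. apply pos_INR. apply Rlt_le, Rinv_0_lt_compat; lra.
Qed.

Lemma Q_bound i n u : 0 < u <= 1 -> Qf i n u <= INR (fact (S n)) * (u * (1 + - ln u)^n).
Proof.
  intros hu. assert (hS := INR_ge1 (S i) ltac:(lia)). assert (hl := mln_nonneg u hu).
  assert (hui : u^(S i) <= u).
  { simpl. assert (u^i <= 1) by (rewrite <- (pow1 i); apply pow_incr; lra).
    assert (0 <= u^i) by (apply pow_le; lra). nra. }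
  assert (hu0 : 0 <= u^(S i)) by (apply pow_le; lra).
  assert (hinv : 0 < / INR (S i) <= 1).
  { split. apply Rinv_0_lt_compat; lra. rewrite <- Rinv_1. apply Rinv_le_contravar; lra. }
  induction n; cbn [Qf].
  - replace (INR (fact 1)) with 1 by reflexivity. rewrite pow_O. unfold Rdiv. nra.
  - assert (hp : (- ln u)^(S n) <= (1 + - ln u)^(S n)) by (apply pow_incr; lra).
    assert (hp0 : 0 <= (- ln u)^(S n)) by (apply pow_le; lra).
    assert (hq : (1 + - ln u)^n <= (1 + - ln u)^(S n)).
    { simpl. assert (0 <= (1 + - ln u)^n) by (apply pow_le; lra). nra. }
    assert (hq0 : 0 <= (1 + - ln u)^n) by (apply pow_le; lra).
    assert (hQ := Q_nonneg i n u hu).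
    set (X := (1 + - ln u)^(S n)) in *.
    assert (t1 : u^(S i) * (- ln u)^(S n) / INR (S i) <= u * X).
    { unfold Rdiv. assert (u^(S i) * (- ln u)^(S n) <= u * X) by (apply Rmult_le_compat; lra).
      assert (0 <= u^(S i) * (- ln u)^(S n)) by (apply Rmult_le_pos; lra). nra. }
    assert (t2 : INR (S n) / INR (S i) * Qf i n u <= INR (S n) * (INR (fact (S n)) * (u * X))).
    { assert (Qf i n u <= INR (fact (S n)) * (u * X)).
      { eapply Rle_trans; [apply IHn|]. apply Rmult_le_compat_l. apply pos_INR.
        apply Rmult_le_compat_l; lra. }
      unfold Rdiv. assert (0 <= INR (S n)) by apply pos_INR. 
      assert (INR (S n) * / INR (S i) * Qf i n u <= INR (S n) * Qf i n u).
      { rewrite (Rmult_comm (INR (S n))), Rmult_assoc. 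
        assert (0 <= INR (S n) * Qf i n u) by nra. nra. }
      nra. }
    assert (hf : INR (S n) * INR (fact (S n)) + 1 <= INR (fact (S (S n)))).
    { rewrite (fact_simpl (S n)), mult_INR. rewrite (S_INR (S n)).
      assert (1 <= INR (fact (S n))) by (apply INR_ge1; apply lt_O_fact). nra. }
    assert (0 <= u * X) by (apply Rmult_le_pos; [lra| unfold X; apply pow_le; lra]).
    nra.
Qed.

Lemma Q_diff i n : 0 <= Qf i n 1 - Qf i n (1/4) <= 3^n.
Proof.
  destruct (MVT_gen (Qf i n) (1/4) 1 (fun u => (- ln u)^n * u^i)) as [c [hc he]].
  - intros x hx. rewrite Rmin_left, Rmax_right in hx by lra. apply Q_deriv; lra.
  - intros x hx. rewrite Rmin_left, Rmax_right in hx by lra. eapply cont_pt_of_derive. apply Q_deriv; lra.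
  - rewrite Rmin_left, Rmax_right in hc by lra. rewrite he.
    assert (h1 := mln_nonneg c ltac:(lra)).
    assert (h2 : - ln c <= 3).
    { assert (ln (1/4) <= ln c) by (apply ln_le'; lra).
      assert (ln 4 <= 4 - 1) by (apply ln_le_sub1; lra).
      replace (1/4) with (/ 4) in H by lra. rewrite ln_Rinv in H by lra. lra. }
    assert (h3 : 0 <= (- ln c)^n <= 3^n) by (split; [apply pow_le|apply pow_incr]; lra).
    assert (h4 : 0 <= c^i <= 1) by (split; [apply pow_le; lra|rewrite <- (pow1 i); apply pow_incr; lra]).
    assert (0 <= (- ln c)^n * c^i <= 3^n) by (split; [apply Rmult_le_pos|]; nra).
    split; nra.
Qed.


Ltac req := match goal with |- ?a = ?b => change (@eq R a b) end.

Definition cc (j : nat) : R := Binomial.C (2 * j) j.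
Definition aa (i : nat) : R := Binomial.C (2 * (i + 1)) (i + 1) / INR (i + 1).

Lemma cc_pos j : 0 < cc j.
Proof. unfold cc, Binomial.C. apply Rdiv_lt_0_compat. apply fact_pos. apply Rmult_lt_0_compat; apply fact_pos. Qed.

Lemma cc_rec m : INR (S m) * cc (S m) = INR (4 * m + 2) * cc m.
Proof.
  unfold cc, Binomial.C.
  replace (2 * S m)%nat with (S (S (2 * m))) by lia.
  replace (S (S (2 * m)) - S m)%nat with (S m) by lia.
  replace (2 * m - m)%nat with m by lia.
  rewrite !fact_simpl, !mult_INR.
  replace (INR (4 * m + 2)) with (2 * (2 * INR m + 1)) by (rewrite plus_INR, mult_INR; simpl; ring).
  rewrite !S_INR, mult_INR. simpl (INR 2).
  assert (h1 := fact_pos m). assert (h2 := fact_pos (2*m)). assert (0 <= INR m) by apply pos_INR.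
  field. lra.
Qed.

Lemma cc1 : cc 1 = 2.
Proof. unfold cc, Binomial.C. simpl. field. Qed.

Lemma aa_cc i : aa i * INR (S i) = cc (S i).
Proof. unfold aa, cc. rewrite Nat.add_1_r. field. apply Rgt_not_eq, INRS_pos. Qed.

Lemma aa_pos i : 0 < aa i.
Proof. unfold aa. rewrite Nat.add_1_r. apply Rdiv_lt_0_compat. apply (cc_pos (S i)). apply INRS_pos. Qed.

Lemma sum_deriv (F dF : nat -> R -> R) k x :
  (forall i, (i <= k)%nat -> is_derive (F i) x (dF i x)) ->
  is_derive (fun t => sum_f_R0 (fun i => F i t) k) x (sum_f_R0 (fun i => dF i x) k).
Proof.
  induction k; intros H.
  - simpl. apply H. lia.
  - simpl. apply (is_derive_plus (fun t => sum_f_R0 (fun i => F i t) k) (F (S k))).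
    apply IHk. intros; apply H; lia. apply H; lia.
Qed.

Lemma sum_cont (F : nat -> R -> R) k x :
  (forall i, (i <= k)%nat -> continuous (F i) x) ->
  continuous (fun t => sum_f_R0 (fun i => F i t) k) x.
Proof.
  induction k; intros H.
  - simpl. apply H. lia.
  - simpl. apply (continuous_plus (fun t => sum_f_R0 (fun i => F i t) k) (F (S k))).
    apply IHk. intros; apply H; lia. apply H; lia.
Qed.

Lemma is_derive_eq (f : R -> R) x l l' : is_derive f x l' -> l' = l -> is_derive f x l.
Proof. intros H ->. exact H. Qed.

Definition Sp (k : nat) (u : R) : R := sum_f_R0 (fun i => cc (S i) * u^i) k.
Definition Pp (k : nat) (u : R) : R := sum_f_R0 (fun i => aa i * u^(S i)) k.

Lemma Pp_deriv k u : is_derive (Pp k) u (Sp k u).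
Proof.
  unfold Pp, Sp. apply (sum_deriv (fun i t => aa i * t^(S i)) (fun i t => cc (S i) * t^i)).
  intros i _. rewrite <- aa_cc. rewrite Rmult_assoc. apply is_derive_scal. apply powS_deriv.
Qed.

Lemma Pp0 k : Pp k 0 = 0.
Proof. unfold Pp. induction k. simpl; ring. rewrite tech5, IHk. simpl; ring. Qed.

Lemma Sp0 k : Sp k 0 = 2.
Proof. unfold Sp. induction k. simpl. rewrite cc1; ring. rewrite tech5, IHk. simpl; ring. Qed.

Definition Nf (k : nat) (x : R) : R := 2 * x - (1 - 2 * x) * (x * (1 - x)) * Sp k (x * (1 - x)).

Lemma N_deriv k x : is_derive (Nf k) x (INR (4 * k + 6) * cc (S k) * (x * (1 - x))^(S k)).
Proof.
  induction k.
  - unfold Nf, Sp. simpl sum_f_R0. rewrite cc1. auto_derive. auto. simpl. ring.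
  - apply (is_derive_ext (fun t => Nf k t - cc (S (S k)) * ((1 - 2 * t) * (t * (1 - t))^(S (S k))))).
    { intros t. unfold Nf, Sp. rewrite tech5. rewrite <- (tech_pow_Rmult _ (S k)). req. ring. }
    assert (H2 : is_derive (fun t => (1 - 2 * t) * (t * (1 - t))^(S (S k))) x
       (-2 * (x * (1 - x))^(S (S k)) + (1 - 2 * x) * (INR (S (S k)) * (1 - 2 * x) * (x * (1 - x))^(S k)))).
    { apply (mult_deriv (fun t => 1 - 2 * t) (fun t => (t * (1 - t))^(S (S k)))).
      auto_derive; auto; ring.
      apply (is_derive_pow (fun t => t * (1 - t)) (S (S k)) x (1 - 2 * x)). auto_derive; auto; ring. }
    assert (H3 := is_derive_minus _ _ x _ _ IHk (is_derive_scal _ x (cc (S (S k))) _ H2)).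
    eapply is_derive_eq. exact H3.
    assert (hr := cc_rec (S k)).
    set (X := cc (S k)) in *. set (Y := cc (S (S k))) in *.
    assert (hY : Y = INR (4 * S k + 2) * X / INR (S (S k))).
    { rewrite <- hr. field. apply Rgt_not_eq, INRS_pos. }
    rewrite hY. change (minus ?a ?b) with (a - b).
    rewrite <- !tech_pow_Rmult.
    replace (INR (4 * S k + 2)) with (4 * INR k + 6) by (replace (4 * S k + 2)%nat with (4*k+6)%nat by lia; rewrite plus_INR, mult_INR; simpl; ring).
    replace (INR (4 * S k + 6)) with (4 * INR k + 10) by (replace (4 * S k + 6)%nat with (4*k+10)%nat by lia; rewrite plus_INR, mult_INR; simpl; ring).
    replace (INR (4 * k + 6)) with (4 * INR k + 6) by (rewrite plus_INR, mult_INR; simpl; ring).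
    rewrite !S_INR. assert (0 <= INR k) by apply pos_INR.
    req. field. lra.
Qed.

Definition Dfn (k : nat) (x : R) : R := 2 * (- ln (1 - x)) - Pp k (x * (1 - x)).

Lemma D_deriv k x : x < 1 -> is_derive (Dfn k) x (2 / (1 - x) - (1 - 2 * x) * Sp k (x * (1 - x))).
Proof.
  intros hx. unfold Dfn.
  assert (H1 : is_derive (fun t => 2 * (- ln (1 - t))) x (2 / (1 - x))).
  { auto_derive. lra. field. lra. }
  assert (H2 : is_derive (fun t => Pp k (t * (1 - t))) x ((1 - 2 * x) * Sp k (x * (1 - x)))).
  { apply (is_derive_comp (Pp k) (fun t => t * (1 - t))). apply Pp_deriv. auto_derive; auto; ring. }
  exact (is_derive_minus _ _ x _ _ H1 H2).
Qed.

Lemma D_N k x : x < 1 -> (2 / (1 - x) - (1 - 2 * x) * Sp k (x * (1 - x))) * (x * (1 - x)) = Nf k x.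
Proof. intros hx. unfold Nf. field. lra. Qed.

Lemma u_mono a b : 0 <= a <= b -> b <= 1/2 -> 0 <= a * (1 - a) <= b * (1 - b).
Proof. intros h1 h2. split; nra. Qed.

Definition Lam (k : nat) : R := INR (4 * k + 6) * cc (S k).

Lemma Lam_pos k : 0 < Lam k.
Proof. unfold Lam. apply Rmult_lt_0_compat. apply lt_0_INR; lia. apply cc_pos. Qed.

Lemma N_bound k x : 0 <= x <= 1/2 -> 0 <= Nf k x <= Lam k * x * (x * (1 - x))^(S k).
Proof.
  intros hx.
  destruct (MVT_gen (Nf k) 0 x (fun t => Lam k * (t * (1 - t))^(S k))) as [c [hc he]].
  - intros t ht. apply N_deriv.
  - intros t ht. eapply cont_pt_of_derive. apply N_deriv.
  - rewrite Rmin_left, Rmax_right in hc by lra.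
    assert (hN0 : Nf k 0 = 0) by (unfold Nf; ring). rewrite hN0 in he.
    assert (hu := u_mono c x ltac:(lra) ltac:(lra)).
    assert (hp : 0 <= (c * (1 - c))^(S k) <= (x * (1 - x))^(S k)) by (split; [apply pow_le|apply pow_incr]; lra).
    assert (hL := Lam_pos k).
    replace (Nf k x) with (Lam k * (c * (1 - c))^(S k) * x) by lra.
    split. apply Rmult_le_pos; [apply Rmult_le_pos|]; lra.
    rewrite (Rmult_assoc (Lam k) x), (Rmult_comm x), <- Rmult_assoc.
    apply Rmult_le_compat_r; [lra|]. apply Rmult_le_compat_l; lra.
Qed.

Definition Mk (k : nat) : R := 4 * Lam k.

Lemma D_bound k x : 0 <= x <= 1/2 -> 0 <= Dfn k x <= Mk k * (x * (1 - x))^(S (S k)).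
Proof.
  intros hx.
  destruct (MVT_gen (Dfn k) 0 x (fun t => 2 / (1 - t) - (1 - 2 * t) * Sp k (t * (1 - t)))) as [c [hc he]].
  - intros t ht. rewrite Rmin_left, Rmax_right in ht by lra. apply D_deriv; lra.
  - intros t ht. rewrite Rmin_left, Rmax_right in ht by lra. eapply cont_pt_of_derive. apply D_deriv; lra.
  - rewrite Rmin_left, Rmax_right in hc by lra.
    assert (hD0 : Dfn k 0 = 0) by (unfold Dfn; rewrite Rmult_0_l, Pp0; replace (1 - 0) with 1 by ring; rewrite ln_1; ring).
    rewrite hD0, Rminus_0_r in he.
    assert (hL := Lam_pos k). unfold Mk.
    assert (hux : 0 <= x * (1 - x)) by nra.
    assert (hx1 : x <= 2 * (x * (1 - x))) by nra.
    assert (hx2 : x * x <= 4 * ((x * (1 - x)) * (x * (1 - x)))).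
    { assert (x * x <= (2 * (x * (1 - x))) * (2 * (x * (1 - x)))) by (apply Rmult_le_compat; lra). lra. }
    destruct (Req_dec c 0) as [hc0|hc0].
    + subst c. replace (0 * (1 - 0)) with 0 in he by ring. rewrite Sp0 in he. replace (2 / (1 - 0) - (1 - 2 * 0) * 2) with 0 in he by field.
      rewrite Rmult_0_l in he. rewrite he. split. lra.
      apply Rmult_le_pos. lra. apply pow_le; lra.
    + set (dc := 2 / (1 - c) - (1 - 2 * c) * Sp k (c * (1 - c))) in *.
      assert (huc : 0 < c * (1 - c)) by nra.
      assert (hdn := D_N k c ltac:(lra)). fold dc in hdn.
      assert (hNb := N_bound k c ltac:(lra)).
      rewrite <- hdn in hNb.
      assert (hdc0 : 0 <= dc) by nra.
      assert (hdc1 : dc <= Lam k * c * (c * (1 - c))^k).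
      { apply (Rmult_le_reg_r (c * (1 - c))); [lra|].
        rewrite <- (tech_pow_Rmult _ k) in hNb. lra. }
      assert (hu := u_mono c x ltac:(lra) ltac:(lra)).
      assert (hp : 0 <= (c * (1 - c))^k <= (x * (1 - x))^k) by (split; [apply pow_le|apply pow_incr]; lra).
      assert (hpx : 0 <= (x * (1 - x))^k) by lra.
      rewrite he. split. nra.
      assert (dc * x <= Lam k * x * x * (x * (1 - x))^k).
      { assert (Lam k * c * (c * (1 - c))^k <= Lam k * x * (x * (1 - x))^k).
        { apply Rmult_le_compat. nra. lra. apply Rmult_le_compat_l; lra. lra. }
        nra. }
      rewrite <- !tech_pow_Rmult.
      assert (Lam k * (x * x) * (x * (1 - x))^k <= Lam k * (4 * ((x * (1 - x)) * (x * (1 - x)))) * (x * (1 - x))^k).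
      { apply Rmult_le_compat_r; [lra|]. apply Rmult_le_compat_l; lra. }
      nra.
Qed.


Definition uu (x : R) : R := x * (1 - x).

Lemma uu_pos x : 0 < x < 1 -> 0 < uu x.
Proof. intros h. unfold uu. nra. Qed.

Definition Rk (k n : nat) (x : R) : R := sum_f_R0 (fun i => aa i * Qf i n (uu x)) k.
Definition Rkd (k n : nat) (x : R) : R :=
  sum_f_R0 (fun i => aa i * ((- ln (uu x))^n * (uu x)^i * (1 - 2 * x))) k.
Definition Qkd (k n : nat) (x : R) : R := (- ln (uu x))^n * (uu x)^(S k) * (1 - 2 * x).

Lemma Qcomp_deriv i n x : 0 < x < 1 ->
  is_derive (fun t => Qf i n (uu t)) x ((- ln (uu x))^n * (uu x)^i * (1 - 2 * x)).
Proof.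
  intros hx.
  assert (Hu : is_derive uu x (1 - 2 * x)) by (unfold uu; auto_derive; auto; req; ring).
  eapply is_derive_eq.
  apply (is_derive_comp (Qf i n) uu x _ _ (Q_deriv i n (uu x) (uu_pos x hx)) Hu).
  change (scal ?a ?b) with (a * b). req. ring.
Qed.

Lemma Rk_deriv k n x : 0 < x < 1 -> is_derive (Rk k n) x (Rkd k n x).
Proof.
  intros hx. unfold Rk, Rkd.
  apply (sum_deriv (fun i t => aa i * Qf i n (uu t)) (fun i t => aa i * ((- ln (uu t))^n * (uu t)^i * (1 - 2 * t)))).
  intros i _. apply is_derive_scal. apply Qcomp_deriv; auto.
Qed.

Lemma Qk_deriv k n x : 0 < x < 1 -> is_derive (fun t => Qf (S k) n (uu t)) x (Qkd k n x).
Proof. intros hx. apply Qcomp_deriv; auto. Qed.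

Lemma Rkd_cont k n x : 0 < x < 1 -> continuous (Rkd k n) x.
Proof.
  intros hx. assert (hu := uu_pos x hx). unfold Rkd.
  apply (sum_cont (fun i t => aa i * ((- ln (uu t))^n * (uu t)^i * (1 - 2 * t)))).
  intros i _. apply exd_cont. unfold uu in *. auto_derive. auto.
Qed.

Lemma Qkd_cont k n x : 0 < x < 1 -> continuous (Qkd k n) x.
Proof. intros hx. assert (hu := uu_pos x hx). apply exd_cont. unfold Qkd, uu in *. auto_derive. auto. Qed.

Lemma f1_cont n x : 0 < x < 1 -> continuous (f1 n) x.
Proof.
  intros hx. apply exd_cont. unfold f1. auto_derive. repeat split; try lra. nra.
Qed.

Lemma Pp_fact k u : Pp k u = u * sum_f_R0 (fun i => aa i * u^i) k.
Proof. unfold Pp. induction k. simpl. ring. rewrite !tech5, IHk. rewrite <- tech_pow_Rmult. ring. Qed.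

Lemma f1_Rkd n k x : 0 < x < 1 ->
  f1 n x - Rkd k n x = (- ln (uu x))^n * (1 - 2 * x) / uu x * Dfn k x.
Proof.
  intros hx. assert (hu := uu_pos x hx).
  unfold f1, Rkd, Dfn. fold (uu x). rewrite Pp_fact.
  assert (hs : sum_f_R0 (fun i => aa i * ((- ln (uu x))^n * (uu x)^i * (1 - 2 * x))) k
              = (- ln (uu x))^n * (1 - 2 * x) * sum_f_R0 (fun i => aa i * (uu x)^i) k).
  { induction k. simpl. ring. rewrite !tech5, IHk. ring. }
  rewrite hs.
  replace (- ln x + - ln (1 - x)) with (- ln (uu x)) by (unfold uu; rewrite ln_mult by lra; ring).
  unfold uu in *. field. split; lra.
Qed.

Lemma f1_Rkd_bound n k x : 0 < x <= 1/2 ->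
  0 <= f1 n x - Rkd k n x <= Mk k * Qkd k n x.
Proof.
  intros hx. rewrite f1_Rkd by lra.
  assert (hu := uu_pos x ltac:(lra)).
  assert (hDb := D_bound k x ltac:(lra)). fold (uu x) in hDb.
  assert (hl : 0 <= - ln (uu x)) by (apply mln_nonneg; unfold uu in *; split; nra).
  assert (hp : 0 <= (- ln (uu x))^n) by (apply pow_le; lra).
  assert (hc : 0 <= (- ln (uu x))^n * (1 - 2 * x) / uu x).
  { unfold Rdiv. apply Rmult_le_pos. apply Rmult_le_pos; lra. apply Rlt_le, Rinv_0_lt_compat; lra. }
  split. nra.
  unfold Qkd.
  replace (Mk k * ((- ln (uu x))^n * (uu x)^(S k) * (1 - 2 * x)))
     with ((- ln (uu x))^n * (1 - 2 * x) / uu x * (Mk k * (uu x)^(S (S k)))).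
  apply Rmult_le_compat_l; lra.
  rewrite <- (tech_pow_Rmult _ (S k)). field. lra.
Qed.

Lemma f1_nonneg n x : 0 < x <= 1/2 -> 0 <= f1 n x.
Proof.
  intros hx. assert (h := f1_Rkd_bound n 0 x hx).
  assert (0 <= Rkd 0 n x).
  { unfold Rkd. simpl. assert (hu := uu_pos x ltac:(lra)).
    assert (0 <= - ln (uu x)) by (apply mln_nonneg; unfold uu in *; split; nra).
    assert (0 <= (- ln (uu x))^n) by (apply pow_le; lra).
    assert (0 < aa 0) by apply aa_pos. rewrite ?pow_O.
    apply Rmult_le_pos. lra. apply Rmult_le_pos. nra. lra. }
  lra.
Qed.


Definition F1 (n : nat) (c : R) : R := RInt (f1 n) c (1/2).

Lemma f1_exint n a b : 0 < a -> a <= b -> b <= 1/2 -> ex_RInt (f1 n) a b.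
Proof.
  intros h1 h2 h3. apply exint_cont. intros z hz.
  rewrite Rmin_left, Rmax_right in hz by lra. apply f1_cont; lra.
Qed.

Lemma uu_range x : 0 < x <= 1/2 -> 0 < uu x <= 1.
Proof. intros h. unfold uu. split; nra. Qed.

Lemma Rk_nonneg k n x : 0 < x <= 1/2 -> 0 <= Rk k n x.
Proof.
  intros hx. unfold Rk. apply cond_pos_sum. intros i. apply Rmult_le_pos.
  apply Rlt_le, aa_pos. apply Q_nonneg. apply uu_range; auto.
Qed.

Lemma F1_bounds n k c : 0 < c <= 1/2 ->
  Rk k n (1/2) - Rk k n c <= F1 n c <=
  Rk k n (1/2) - Rk k n c + Mk k * (Qf (S k) n (uu (1/2)) - Qf (S k) n (uu c)).
Proof.
  intros hc. unfold F1.
  assert (Hex := f1_exint n c (1/2) ltac:(lra) ltac:(lra) ltac:(lra)).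
  assert (H1 : is_RInt (Rkd k n) c (1/2) (Rk k n (1/2) - Rk k n c)).
  { apply ftc; intros x hx; rewrite Rmin_left, Rmax_right in hx by lra.
    apply Rk_deriv; lra. apply Rkd_cont; lra. }
  assert (H2 : is_RInt (fun x => Rkd k n x + Mk k * Qkd k n x) c (1/2)
     ((fun x => Rk k n x + Mk k * Qf (S k) n (uu x)) (1/2) - (fun x => Rk k n x + Mk k * Qf (S k) n (uu x)) c)).
  { apply (ftc (fun x => Rk k n x + Mk k * Qf (S k) n (uu x))); intros x hx; rewrite Rmin_left, Rmax_right in hx by lra.
    apply (is_derive_plus (Rk k n) (fun t => Mk k * Qf (S k) n (uu t))). apply Rk_deriv; lra.
    apply is_derive_scal. apply Qk_deriv; lra.
    apply (continuous_plus (Rkd k n) (fun t => Mk k * Qkd k n t)). apply Rkd_cont; lra.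
    apply (continuous_scal_r (Mk k) (Qkd k n)). apply Qkd_cont; lra. }
  split.
  - rewrite <- (is_RInt_unique _ _ _ _ H1). apply RInt_le. lra. exists (Rk k n (1/2) - Rk k n c); exact H1. exact Hex.
    intros x hx. assert (h := f1_Rkd_bound n k x ltac:(lra)). lra.
  - eapply Rle_trans. apply (RInt_le _ (fun x => Rkd k n x + Mk k * Qkd k n x)). lra. exact Hex.
    eexists; exact H2. intros x hx. assert (h := f1_Rkd_bound n k x ltac:(lra)). lra.
    rewrite (is_RInt_unique _ _ _ _ H2). simpl. lra.
Qed.

Lemma F1_mono n c1 c2 : 0 < c1 <= c2 -> c2 <= 1/2 -> F1 n c2 <= F1 n c1.
Proof.
  intros h1 h2. unfold F1.
  rewrite <- (RInt_Chasles (f1 n) c1 c2 (1/2)).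
  2: apply f1_exint; lra. 2: apply f1_exint; lra.
  change (plus ?a ?b) with (a + b).
  assert (0 <= RInt (f1 n) c1 c2).
  { apply RInt_ge_0. lra. apply f1_exint; lra. intros x hx. apply f1_nonneg; lra. }
  lra.
Qed.

Definition EF (n : nat) (y : R) : Prop := exists c, 0 < c <= 1/2 /\ y = F1 n c.

Lemma EF_lub n : exists L, is_lub (EF n) L.
Proof.
  destruct (completeness (EF n)) as [L HL].
  - exists (Rk 0 n (1/2) + Mk 0 * Qf 1 n (uu (1/2))).
    intros y [c [hc ->]]. assert (h := F1_bounds n 0 c hc).
    assert (0 <= Rk 0 n c) by (apply Rk_nonneg; lra).
    assert (0 <= Qf 1 n (uu c)) by (apply Q_nonneg; apply uu_range; lra).
    assert (0 < Mk 0) by (unfold Mk; generalize (Lam_pos 0); lra).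
    nra.
  - exists (F1 n (1/2)). exists (1/2). split; [lra|auto].
  - exists L; exact HL.
Qed.


Lemma gf_cont n x : 0 < x < 1 -> continuous (gf n) x.
Proof. intros hx. apply exd_cont. unfold gf. auto_derive. fixS. assert (HS := INRS_pos n). repeat split; try lra; try nra; apply Rgt_not_eq, Rmult_lt_0_compat; lra. Qed.

Lemma gf1_cont n x : 0 < x < 1 -> continuous (fun y => gf n (1 - y)) x.
Proof. intros hx. apply exd_cont. unfold gf. auto_derive. fixS. assert (HS := INRS_pos n). repeat split; try lra; try nra; apply Rgt_not_eq, Rmult_lt_0_compat; lra. Qed.

Lemma gf_exint n a b : 0 < a -> a <= b -> b < 1 -> ex_RInt (gf n) a b.
Proof.
  intros h1 h2 h3. apply exint_cont. intros z hz.
  rewrite Rmin_left, Rmax_right in hz by lra. apply gf_cont; lra.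
Qed.

Lemma gf_nonneg n x : 0 < x < 1 -> 0 <= gf n x.
Proof.
  intros hx. unfold gf.
  assert (h1 : 0 <= - ln x) by (apply mln_nonneg; lra).
  assert (h2 : - ln x <= - ln (x * (1 - x))).
  { assert (ln (x * (1 - x)) <= ln x) by (apply ln_le'; nra). lra. }
  assert ((- ln x)^(S n) <= (- ln (x * (1 - x)))^(S n)) by (apply pow_incr; lra).
  assert (0 < INR (S n) * x) by (apply Rmult_lt_0_compat; [apply INRS_pos|lra]).
  unfold Rdiv. apply Rmult_le_pos. lra. apply Rlt_le, Rinv_0_lt_compat; lra.
Qed.

Definition GG (n : nat) (c : R) : R := RInt (gf n) c (1/2) + RInt (gf n) (1/2) (1 - c).

Lemma refl_int n c : 0 < c <= 1/2 -> RInt (fun y => gf n (1 - y)) c (1/2) = RInt (gf n) (1/2) (1 - c).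
Proof.
  intros hc.
  assert (Hex1 : ex_RInt (gf n) (1 - c) (1/2)).
  { apply exint_cont. intros z hz. rewrite Rmin_right, Rmax_left in hz by lra. apply gf_cont; lra. }
  assert (Hex2 : ex_RInt (fun y => gf n (1 - y)) c (1/2)).
  { apply exint_cont. intros z hz. rewrite Rmin_left, Rmax_right in hz by lra. apply gf1_cont; lra. }
  assert (H := RInt_comp_lin (gf n) (-1) 1 c (1/2)).
  replace (-1 * c + 1) with (1 - c) in H by ring.
  replace (-1 * (1/2) + 1) with (1/2) in H by field.
  specialize (H Hex1).
  assert (Eext : RInt (fun y => scal (-1) (gf n (-1 * y + 1))) c (1/2) = RInt (fun y => - gf n (1 - y)) c (1/2)).
  { apply RInt_ext. intros x _. replace (-1 * x + 1) with (1 - x) by ring.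
    change (-1 * gf n (1 - x) = - gf n (1 - x)). ring. }
  assert (H' : RInt (fun y => - gf n (1 - y)) c (1/2) = RInt (gf n) (1 - c) (1/2)).
  { rewrite <- Eext. exact H. }
  clear H Eext.
  assert (Eo := RInt_opp (V:=R_CompleteNormedModule) _ _ _ Hex2).
  assert (Es := opp_RInt_swap (V:=R_CompleteNormedModule) (gf n) (1/2) (1 - c) ltac:(apply gf_exint; lra)).
  change (opp ?a) with (- a) in Eo, Es.
  assert (Eo' : RInt (fun y => - gf n (1 - y)) c (1/2) = - RInt (fun y => gf n (1 - y)) c (1/2)) by exact Eo.
  assert (Es' : - RInt (gf n) (1/2) (1 - c) = RInt (gf n) (1 - c) (1/2)) by exact Es.
  lra.
Qed.

Lemma hf_cont n x : 0 < x < 1 -> continuous (hf n) x.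
Proof.
  intros hx. unfold hf. apply (continuous_plus (gf n) (fun y => gf n (1 - y))).
  apply gf_cont; auto. apply gf1_cont; auto.
Qed.

Lemma GG_eq n c : 0 < c <= 1/2 -> GG n c = F1 n c + Wf n (1/2) - Wf n c.
Proof.
  intros hc. unfold GG, F1.
  rewrite <- refl_int by auto.
  assert (Hex2 : ex_RInt (fun y => gf n (1 - y)) c (1/2)).
  { apply exint_cont. intros z hz. rewrite Rmin_left, Rmax_right in hz by lra. apply gf1_cont; lra. }
  assert (Hex3 : ex_RInt (gf n) c (1/2)) by (apply gf_exint; lra).
  assert (HW : is_RInt (fun x => hf n x - f1 n x) c (1/2) (Wf n (1/2) - Wf n c)).
  { apply ftc; intros x hx; rewrite Rmin_left, Rmax_right in hx by lra.
    apply W_deriv; lra.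
    apply (continuous_minus (hf n) (f1 n)). apply hf_cont; lra. apply f1_cont; lra. }
  assert (Hex4 := f1_exint n c (1/2) ltac:(lra) ltac:(lra) ltac:(lra)).
  assert (E1 : RInt (fun x => gf n x + gf n (1 - x)) c (1/2) = RInt (gf n) c (1/2) + RInt (fun y => gf n (1 - y)) c (1/2))
    by exact (RInt_plus (V:=R_CompleteNormedModule) _ _ _ _ Hex3 Hex2).
  assert (E2 : RInt (fun x => f1 n x + (hf n x - f1 n x)) c (1/2) = RInt (f1 n) c (1/2) + RInt (fun x => hf n x - f1 n x) c (1/2))
    by exact (RInt_plus (V:=R_CompleteNormedModule) _ _ _ _ Hex4 (ex_intro _ _ HW)).
  assert (E3 : RInt (fun x => gf n x + gf n (1 - x)) c (1/2) = RInt (fun x => f1 n x + (hf n x - f1 n x)) c (1/2)).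
  { apply RInt_ext. intros x _. req. unfold hf. ring. }
  rewrite (is_RInt_unique _ _ _ _ HW) in E2.
  lra.
Qed.


Lemma gf_split n a b : 0 < a <= 1/2 -> 1/2 <= b < 1 ->
  RInt (gf n) a b = RInt (gf n) a (1/2) + RInt (gf n) (1/2) b.
Proof.
  intros ha hb. symmetry.
  exact (RInt_Chasles (V:=R_CompleteNormedModule) (gf n) a (1/2) b
     ltac:(apply gf_exint; lra) ltac:(apply gf_exint; lra)).
Qed.

Lemma gf_chasles n a b c : 0 < a <= b -> b <= c -> c < 1 ->
  RInt (gf n) a c = RInt (gf n) a b + RInt (gf n) b c.
Proof.
  intros h1 h2 h3. symmetry.
  exact (RInt_Chasles (V:=R_CompleteNormedModule) (gf n) a b c
     ltac:(apply gf_exint; lra) ltac:(apply gf_exint; lra)).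
Qed.

Lemma gf_int_nonneg n a b : 0 < a <= b -> b < 1 -> 0 <= RInt (gf n) a b.
Proof.
  intros h1 h2. apply RInt_ge_0. lra. apply gf_exint; lra. intros x hx. apply gf_nonneg; lra.
Qed.

Lemma sandwich n a b : 0 < a <= 1/2 -> 1/2 <= b < 1 ->
  GG n (Rmax a (1 - b)) <= RInt (gf n) a b <= GG n (Rmin a (1 - b)).
Proof.
  intros ha hb. rewrite gf_split by lra. unfold GG.
  destruct (Rle_dec a (1 - b)) as [h|h].
  - rewrite Rmax_right, Rmin_left by lra.
    replace (1 - (1 - b)) with b by ring.
    rewrite (gf_chasles n a (1 - b) (1/2)) by lra.
    rewrite (gf_chasles n (1/2) b (1 - a)) by lra.
    assert (0 <= RInt (gf n) a (1 - b)) by (apply gf_int_nonneg; lra).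
    assert (0 <= RInt (gf n) b (1 - a)) by (apply gf_int_nonneg; lra).
    lra.
  - rewrite Rmax_left, Rmin_right by lra.
    replace (1 - (1 - b)) with b by ring.
    rewrite (gf_chasles n (1 - b) a (1/2)) by lra.
    rewrite (gf_chasles n (1/2) (1 - a) b) by lra.
    assert (0 <= RInt (gf n) (1 - b) a) by (apply gf_int_nonneg; lra).
    assert (0 <= RInt (gf n) (1 - a) b) by (apply gf_int_nonneg; lra).
    lra.
Qed.

Lemma GG_lim n L : is_lub (EF n) L -> forall eps, 0 < eps ->
  exists d, 0 < d <= 1/2 /\ forall c, 0 < c < d -> Rabs (GG n c - (L + Wf n (1/2))) < eps.
Proof.
  intros [HL1 HL2] eps he.
  assert (Hc0 : exists c0, 0 < c0 <= 1/2 /\ L - eps/2 < F1 n c0).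
  { apply Classical_Prop.NNPP. intros Hn.
    assert (L <= L - eps/2); [|lra].
    apply HL2. intros y [c [hc ->]]. apply Rnot_lt_le. intros hlt. apply Hn. exists c. auto. }
  destruct Hc0 as [c0 [hc0 hF]].
  assert (hn5 : 0 < INR (n + 5)) by (apply lt_0_INR; lia).
  destruct (xlog_small 2 (S n) (eps / (4 * INR (n + 5))) ltac:(lra)) as [d1 [hd1 Hd1]].
  { apply Rdiv_lt_0_compat; lra. }
  exists (Rmin c0 d1). split. split. apply Rmin_glb_lt; lra. eapply Rle_trans; [apply Rmin_l|lra].
  intros c [hc1 hc2].
  assert (hcc0 : c <= c0) by (eapply Rlt_le, Rlt_le_trans; [apply hc2|apply Rmin_l]).
  assert (hcd1 : c < d1) by (eapply Rlt_le_trans; [apply hc2|apply Rmin_r]).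
  rewrite GG_eq by lra.
  assert (hm := F1_mono n c c0 ltac:(lra) ltac:(lra)).
  assert (hub : F1 n c <= L) by (apply HL1; exists c; split; [lra|auto]).
  assert (hW := W_bound n c ltac:(lra)).
  assert (hx := Hd1 c ltac:(lra)).
  assert (hW2 : Rabs (Wf n c) < eps / 2).
  { eapply Rle_lt_trans. apply hW.
    replace (INR (n + 5) * (2 * c) * (2 + - ln c) ^ S n) with (2 * INR (n + 5) * (c * (2 + - ln c) ^ S n)) by ring.
    apply (Rmult_lt_reg_r (/ (2 * INR (n + 5)))). apply Rinv_0_lt_compat; lra.
    replace (2 * INR (n + 5) * (c * (2 + - ln c) ^ S n) * / (2 * INR (n + 5))) with (c * (2 + - ln c) ^ S n) by (field; lra).
    replace (eps / 2 * / (2 * INR (n + 5))) with (eps / (4 * INR (n + 5))) by (field; lra). exact hx. }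
  apply Rabs_def2 in hW2. apply Rabs_def1; lra.
Qed.

Lemma improper_lim n L : is_lub (EF n) L -> forall eps, 0 < eps ->
  exists d, 0 < d <= 1/2 /\ forall a b, 0 < a < d -> 1 - d < b < 1 ->
    Rabs (RInt (gf n) a b - (L + Wf n (1/2))) < eps.
Proof.
  intros HL eps he. destruct (GG_lim n L HL eps he) as [d [hd Hd]].
  exists d. split; auto. intros a b ha hb.
  assert (hs := sandwich n a b ltac:(lra) ltac:(lra)).
  assert (h1 := Hd (Rmax a (1 - b)) ltac:(split; [apply Rlt_le_trans with a; [lra|apply Rmax_l]|apply Rmax_lub_lt; lra])).
  assert (h2 := Hd (Rmin a (1 - b)) ltac:(split; [apply Rmin_glb_lt; lra|eapply Rle_lt_trans; [apply Rmin_l|lra]])).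
  apply Rabs_def2 in h1. apply Rabs_def2 in h2. apply Rabs_def1; lra.
Qed.


Lemma is_I_val n L : is_lub (EF n) L -> is_I n (L + Wf n (1/2)).
Proof.
  intros HL. exists (gf n). split.
  - intros x hx. apply inner_ok; auto.
  - intros eps he. destruct (improper_lim n L HL eps he) as [d [hd Hd]].
    exists d. split. lra. intros a b ha hb.
    assert (Hex : ex_RInt (gf n) a b) by (apply gf_exint; lra).
    exists (ex_RInt_Reals_0 _ _ _ Hex). rewrite <- RInt_Reals. apply Hd; auto.
Qed.

Lemma is_I_unique n L v : is_lub (EF n) L -> is_I n v -> v = L + Wf n (1/2).
Proof.
  intros HL [g [Hg Himp]].
  assert (Hgg : forall x, 0 < x < 1 -> g x = gf n x).
  { intros x hx. destruct (Hg x hx) as [pr1 e1]. destruct (inner_ok n x hx) as [pr2 e2].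
    rewrite <- e1, <- e2. apply RiemannInt_P5. }
  apply Rminus_diag_uniq. apply Rabs_eq_0. 
  apply Rle_antisym; [|apply Rabs_pos].
  apply Rnot_lt_le. intros hpos.
  set (eps := Rabs (v - (L + Wf n (1/2)))) in *.
  destruct (Himp (eps/2) ltac:(lra)) as [d1 [hd1 H1]].
  destruct (improper_lim n L HL (eps/2) ltac:(lra)) as [d2 [hd2 H2]].
  set (a := Rmin d1 d2 / 2).
  assert (ha0 : 0 < a) by (unfold a; assert (0 < Rmin d1 d2) by (apply Rmin_glb_lt; lra); lra).
  assert (ha1 : a < d1) by (unfold a; generalize (Rmin_l d1 d2); lra).
  assert (ha2 : a < d2) by (unfold a; generalize (Rmin_r d1 d2); lra).
  destruct (H1 a (1 - a) ltac:(lra) ltac:(lra)) as [pr hpr].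
  assert (hb := H2 a (1 - a) ltac:(lra) ltac:(lra)).
  rewrite <- RInt_Reals in hpr.
  rewrite (RInt_ext g (gf n)) in hpr.
  2: { intros x hx. rewrite Rmin_left, Rmax_right in hx by lra. apply Hgg; lra. }
  apply Rabs_def2 in hpr. apply Rabs_def2 in hb.
  unfold eps in *. destruct (Rabs_def2 _ _ (Rle_lt_trans _ _ _ (Rle_refl _) (Rlt_plus_1 (Rabs (v - (L + Wf n (1/2))))))).
  revert hpr hb. generalize (RInt (gf n) a (1 - a)). intros r hr hb.
  destruct (Rle_dec 0 (v - (L + Wf n (1/2)))).
  rewrite Rabs_right in * by lra. lra. rewrite Rabs_left in * by lra. lra.
Qed.


Definition SA (k : nat) : R := sum_f_R0 (fun i => aa i) k.

Lemma SA_pos k : 0 < SA k.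
Proof. unfold SA. induction k. simpl. apply aa_pos. rewrite tech5. generalize (aa_pos (S k)). lra. Qed.

Lemma Rk_bound k n c : 0 < c <= 1/2 ->
  Rk k n c <= SA k * (INR (fact (S n)) * (uu c * (1 + - ln (uu c))^n)).
Proof.
  intros hc. unfold Rk, SA. rewrite (Rmult_comm (sum_f_R0 _ k)), scal_sum. apply sum_Rle. intros i _.
  apply Rmult_le_compat_l. apply Rlt_le, aa_pos.
  apply Q_bound. apply uu_range; auto.
Qed.

Lemma Rk_small n k eps : 0 < eps -> exists c, 0 < c <= 1/2 /\ Rk k n c < eps.
Proof.
  intros he.
  assert (hS := SA_pos k). assert (hf := fact_pos (S n)).
  destruct (xlog_small 1 n (eps / (SA k * INR (fact (S n)))) ltac:(lra)) as [d [hd Hd]].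
  { apply Rdiv_lt_0_compat; [lra|]. apply Rmult_lt_0_compat; lra. }
  set (c := Rmin d (1/2) / 2).
  assert (hc0 : 0 < Rmin d (1/2)) by (apply Rmin_glb_lt; lra).
  assert (hc1 : c <= 1/2) by (unfold c; generalize (Rmin_r d (1/2)); lra).
  assert (hc2 : c < d) by (unfold c; generalize (Rmin_l d (1/2)); lra).
  assert (hcp : 0 < c) by (unfold c; lra).
  assert (huc : uu c <= c) by (unfold uu; nra).
  exists c. split. lra.
  eapply Rle_lt_trans. apply Rk_bound. lra.
  assert (hu := uu_range c ltac:(lra)).
  assert (hx := Hd (uu c) ltac:(lra)).
  apply (Rmult_lt_reg_r (/ (SA k * INR (fact (S n))))). apply Rinv_0_lt_compat, Rmult_lt_0_compat; lra.
  replace (SA k * (INR (fact (S n)) * (uu c * (1 + - ln (uu c)) ^ n)) * / (SA k * INR (fact (S n))))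
    with (uu c * (1 + - ln (uu c)) ^ n) by (field; lra).
  exact hx.
Qed.

Lemma L_bounds n k L : is_lub (EF n) L ->
  Rk k n (1/2) <= L <= Rk k n (1/2) + Mk k * Qf (S k) n (uu (1/2)).
Proof.
  intros [HL1 HL2]. split.
  - apply Rnot_lt_le. intros hlt.
    destruct (Rk_small n k (Rk k n (1/2) - L) ltac:(lra)) as [c [hc hR]].
    assert (h := F1_bounds n k c hc).
    assert (F1 n c <= L) by (apply HL1; exists c; split; auto). lra.
  - apply HL2. intros y [c [hc ->]].
    assert (h := F1_bounds n k c hc).
    assert (0 <= Rk k n c) by (apply Rk_nonneg; lra).
    assert (0 <= Qf (S k) n (uu c)) by (apply Q_nonneg; apply uu_range; lra).
    assert (0 < Mk k) by (unfold Mk; generalize (Lam_pos k); lra).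
    nra.
Qed.

Lemma ps_eq n k : INR (fact n) * partial_sum (S k) n = sum_f_R0 (fun i => aa i * Qf i n 1) k.
Proof.
  unfold partial_sum. replace (S k - 1)%nat with k by lia.
  rewrite scal_sum. apply sum_eq. intros i _. rewrite Q_one. unfold aa.
  rewrite Nat.add_1_r. replace (n + 2)%nat with (S (S n)) by lia.
  assert (h := INRS_pos i). rewrite <- (tech_pow_Rmult _ (S n)). field.
  split. apply pow_nonzero; lra. lra.
Qed.

Lemma pow2_bound n : INR (n + 5) <= 5 * 2^n.
Proof.
  induction n. simpl. lra.
  replace (S n + 5)%nat with (S (n + 5)) by lia. rewrite S_INR. simpl.
  assert (1 <= 2^n) by (rewrite <- (pow1 n); apply pow_incr; lra). lra.
Qed.

Lemma W_half n : Rabs (Wf n (1/2)) <= 15 * 6^n.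
Proof.
  eapply Rle_trans. apply W_bound. lra.
  assert (h1 : - ln (1/2) <= 1).
  { replace (1/2) with (/ 2) by lra. rewrite ln_Rinv by lra.
    assert (ln 2 <= 2 - 1) by (apply ln_le_sub1; lra). lra. }
  assert (h0 : 0 <= - ln (1/2)) by (apply mln_nonneg; lra).
  assert (hp : (2 + - ln (1/2))^(S n) <= 3^(S n)) by (apply pow_incr; lra).
  assert (hp0 : 0 <= (2 + - ln (1/2))^(S n)) by (apply pow_le; lra).
  assert (h5 := pow2_bound n).
  assert (h50 : 0 <= INR (n + 5)) by apply pos_INR.
  replace (2 * (1/2)) with 1 by field. rewrite Rmult_1_r.
  assert (INR (n + 5) * (2 + - ln (1/2))^(S n) <= 5 * 2^n * 3^(S n)).
  { apply Rmult_le_compat; lra. }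
  replace (5 * 2^n * 3^(S n)) with (15 * 6^n) in H.
  lra. rewrite <- tech_pow_Rmult. replace 6 with (2 * 3) by ring. rewrite Rpow_mult_distr. ring.
Qed.


Lemma main_bound n k L : is_lub (EF n) L ->
  Rabs ((L + Wf n (1/2)) / INR (fact n) - partial_sum (S k) n)
  <= Mk k / INR (S (S k))^(S n) + (15 + SA k) * 6^n / INR (fact n).
Proof.
  intros HL.
  assert (hf := fact_pos n).
  assert (hu : uu (1/2) = 1/4) by (unfold uu; field).
  assert (hLb := L_bounds n k L HL). rewrite hu in hLb.
  assert (hR : Rk k n (1/2) = sum_f_R0 (fun i => aa i * Qf i n (1/4)) k) by (unfold Rk; rewrite hu; reflexivity).
  set (X := sum_f_R0 (fun i => aa i * Qf i n 1) k).
  assert (hX := ps_eq n k). fold X in hX.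
  assert (hXR : 0 <= X - Rk k n (1/2) <= SA k * 6^n).
  { rewrite hR. unfold X. rewrite <- minus_sum. split.
    apply cond_pos_sum. intros i. rewrite <- Rmult_minus_distr_l.
    apply Rmult_le_pos. apply Rlt_le, aa_pos. apply Q_diff.
    unfold SA. rewrite (Rmult_comm (sum_f_R0 _ k)), scal_sum. apply sum_Rle. intros i _.
    rewrite <- Rmult_minus_distr_l. apply Rmult_le_compat_l. apply Rlt_le, aa_pos.
    eapply Rle_trans. apply Q_diff. apply pow_incr. lra. }
  assert (hQ := Q_diff (S k) n). rewrite Q_one in hQ.
  assert (hMk : 0 < Mk k) by (unfold Mk; generalize (Lam_pos k); lra).
  assert (hQ2 : Mk k * Qf (S k) n (1/4) <= Mk k * (INR (fact n) / INR (S (S k))^(S n))).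
  { apply Rmult_le_compat_l; lra. }
  assert (hW := W_half n).
  assert (h6 : 0 <= 6^n) by (apply pow_le; lra).
  assert (hk : 0 < INR (S (S k))^(S n)) by (apply pow_lt, INRS_pos).
  assert (Hmain : Rabs (L + Wf n (1/2) - X) <= Mk k * (INR (fact n) / INR (S (S k))^(S n)) + (15 + SA k) * 6^n).
  { assert (hW' : - (15 * 6^n) <= Wf n (1/2) <= 15 * 6^n) by (unfold Rabs in hW; destruct Rcase_abs in hW; lra).
    assert (hL2 : 0 <= L - Rk k n (1/2) <= Mk k * (INR (fact n) / INR (S (S k))^(S n))) by lra.
    unfold Rabs; destruct Rcase_abs; lra. }
  replace ((L + Wf n (1/2)) / INR (fact n) - partial_sum (S k) n) with ((L + Wf n (1/2) - X) / INR (fact n)).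
  2: { rewrite <- hX. field. lra. }
  unfold Rdiv at 1. rewrite Rabs_mult, (Rabs_right (/ INR (fact n))) by (apply Rle_ge, Rlt_le, Rinv_0_lt_compat; lra).
  apply (Rmult_le_reg_r (INR (fact n))). lra.
  rewrite Rmult_assoc, Rinv_l, Rmult_1_r by lra.
  replace ((Mk k / INR (S (S k))^(S n) + (15 + SA k) * 6^n / INR (fact n)) * INR (fact n))
    with (Mk k * (INR (fact n) / INR (S (S k))^(S n)) + (15 + SA k) * 6^n) by (field; lra).
  exact Hmain.
Qed.


Lemma asym_bound k : exists N, forall n, (N <= n)%nat -> forall L, is_lub (EF n) L ->
  Rabs ((L + Wf n (1/2)) / INR (fact n) - partial_sum (S k) n) <= (Mk k + 15 + SA k) * / INR (S (S k))^n.
Proof.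
  assert (hk2 : 1 <= INR (S (S k))) by (apply INR_ge1; lia).
  destruct (cv_speed_pow_fact (6 * INR (S (S k))) 1 ltac:(lra)) as [N HN].
  exists N. intros n hn L HL.
  assert (hm := main_bound n k L HL).
  assert (hf := fact_pos n).
  assert (hp : 0 < INR (S (S k))^n) by (apply pow_lt; lra).
  assert (hSA := SA_pos k).
  assert (hMk : 0 < Mk k) by (unfold Mk; generalize (Lam_pos k); lra).
  assert (h1 : Mk k / INR (S (S k))^(S n) <= Mk k * / INR (S (S k))^n).
  { unfold Rdiv. apply Rmult_le_compat_l. lra. apply Rinv_le_contravar. lra.
    rewrite <- tech_pow_Rmult. nra. }
  assert (h2 : 6^n / INR (fact n) <= / INR (S (S k))^n).
  { specialize (HN n ltac:(lia)). unfold R_dist in HN. rewrite Rminus_0_r in HN.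
    rewrite Rpow_mult_distr in HN.
    rewrite Rabs_right in HN. 2: { apply Rle_ge. unfold Rdiv. apply Rmult_le_pos. apply Rmult_le_pos; apply pow_le; lra. apply Rlt_le, Rinv_0_lt_compat; lra. }
    apply (Rmult_le_reg_r (INR (S (S k))^n)). lra. rewrite Rinv_l by lra.
    replace (6 ^ n / INR (fact n) * INR (S (S k)) ^ n) with (6 ^ n * INR (S (S k)) ^ n / INR (fact n)) by (field; lra).
    lra. }
  assert (h3 : (15 + SA k) * 6^n / INR (fact n) <= (15 + SA k) * / INR (S (S k))^n).
  { unfold Rdiv. rewrite Rmult_assoc. apply Rmult_le_compat_l. lra. exact h2. }
  lra.
Qed.

Lemma ps_one n : partial_sum 1 n = 2.
Proof.
  unfold partial_sum. replace (1 - 1)%nat with 0%nat by lia. simpl sum_f_R0.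
  change (Binomial.C 2 1) with (cc 1). rewrite cc1, pow1. field.
Qed.

Theorem theorem3 :
  (forall n : nat, exists v : R, is_I n v) /\
  (forall I : nat -> R, (forall n, is_I n (I n)) ->
     Un_cv (fun n => I n / (2 * INR (fact n))) 1 /\
     (forall K : nat, (1 <= K)%nat ->
        exists Cst : R, exists N : nat, forall n : nat, (N <= n)%nat ->
          Rabs (I n / INR (fact n) - partial_sum K n) <= Cst * / (INR (K + 1)) ^ n)).
Proof.
  split.
  - intros n. destruct (EF_lub n) as [L HL]. exists (L + Wf n (1/2)). apply is_I_val; auto.
  - intros I HI.
    assert (HIv : forall n L, is_lub (EF n) L -> I n = L + Wf n (1/2)).
    { intros n L HL. apply (is_I_unique n L); auto. }
    split.
    + intros eps he.
      destruct (asym_bound 0) as [N1 HN1].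
      set (C0 := Mk 0 + 15 + SA 0).
      assert (hC0 : 0 < C0) by (unfold C0, Mk; generalize (Lam_pos 0) (SA_pos 0); lra).
      destruct (pow_lt_1_zero (/ 2) ltac:(rewrite Rabs_right; lra) (2 * eps / C0) ltac:(apply Rdiv_lt_0_compat; lra)) as [N2 HN2].
      exists (Nat.max N1 N2). intros n hn.
      destruct (EF_lub n) as [L HL].
      assert (hb := HN1 n ltac:(lia) L HL). rewrite ps_one in hb.
      assert (hp := HN2 n ltac:(lia)).
      rewrite <- HIv in hb by auto. fold C0 in hb.
      rewrite Rabs_right in hp by (apply Rle_ge, pow_le; lra).
      replace (INR (S (S 0))) with 2 in hb by (simpl; ring).
      rewrite <- Rinv_pow in hp by lra.
      assert (hf := fact_pos n).
      unfold R_dist.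
      replace (I n / (2 * INR (fact n)) - 1) with ((I n / INR (fact n) - 2) / 2) by (field; lra).
      unfold Rdiv at 1. rewrite Rabs_mult. rewrite (Rabs_right (/ 2)) by lra.
      assert (C0 * / 2 ^ n < 2 * eps).
      { apply (Rmult_lt_reg_r (/ C0)). apply Rinv_0_lt_compat; lra.
        replace (C0 * / 2 ^ n * / C0) with (/ 2 ^ n) by (field; repeat split; try lra; apply pow_nonzero; lra).
        replace (2 * eps * / C0) with (2 * eps / C0) by (unfold Rdiv; ring). exact hp. }
      lra.
    + intros K hK. destruct K as [|k]. lia.
      destruct (asym_bound k) as [N HN].
      exists (Mk k + 15 + SA k), N. intros n hn.
      destruct (EF_lub n) as [L HL].
      rewrite (HIv n L HL). replace (S k + 1)%nat with (S (S k)) by lia.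
      apply HN; auto.
Qed.
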